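(* Let $\alpha\in(0,\tfrac12]$ and $X_A,X_B>0$ satisfy $$\sqrt{\tfrac{8\alpha}{1-\alpha}}-\tfrac{2\alpha}{1-\alpha}\le\frac{X_B}{X_A}<\min\Big\{1,\sqrt{\tfrac{1-\alpha}{3\alpha}}\Big\},$$ and suppose the solution function $S$ has exactly one zero $\sigma^*$ in $(0,\infty)$. Then there exists a pre-commitment $p\in[0,X_B]$ by player $B$ to some battlefield $b\in\{1,2\}$ such that $u_B(p)>\pi_B(\sigma^* )$.
   Context: Two-battlefield asymmetric setting: valuations $v_{A,1}=\alpha$, $v_{A,2}=1-\alpha$, $v_{B,1}=1-\alpha$, $v_{B,2}=\alpha$, budgets $X_A,X_B>0$. Define, for $x,y\ge0$, $L(x,y)=\frac{x}{2y}$ if $0\le x\le y$, $y>0$; $L(x,y)=1-\frac{y}{2x}$ if $x>y\ge0$; $L(0,0)=\tfrac12$. Let $c=\frac{(1-\alpha)^2}{\alpha}+\frac{\alpha^2}{1-\alpha}$, $r=X_A/X_B$, and $S:(0,\infty)\to\mathbb R$: $S(\sigma)=\sigma^2(c\sigma-r)$ on $(0,\frac{\alpha}{1-\alpha})$; $S(\sigma)=\frac{\alpha^2}{1-\alpha}(\sigma^3-r)+\alpha\sigma(1-r\sigma)$ on $[\frac{\alpha}{1-\alpha},\frac{1-\alpha}{\alpha})$; $S(\sigma)=\sigma-rc$ on $[\frac{1-\alpha}{\alpha},\infty)$. Player $B$'s equilibrium payoff for a zero $\sigma$: $\pi_B(\sigma)=1-\frac{\sigma}{2}$ if $\sigma\in(0,\frac{\alpha}{1-\alpha})$;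 $\pi_B(\sigma)=1-\alpha-\frac{\alpha\sigma}{2}+\frac{\alpha^2}{2\sigma(1-\alpha)}$ if $\sigma\in[\frac{\alpha}{1-\alpha},\frac{1-\alpha}{\alpha})$; $\pi_B(\sigma)=\frac{c}{2\sigma}$ if $\sigma\ge\frac{1-\alpha}{\alpha}$. Pre-commitment: $B$ places $p\in[0,X_B]$ on one battlefield $b\in\{1,2\}$; $u_A^{M}(p)=v_{A,b}+(1-v_{A,b})L(X_A-p,X_B-p)$ (for $p\le X_A$), $u_A^{W}(p)=(1-v_{A,b})L(X_A,X_B-p)$; $A$'s response is $\mathtt A_b(p)=\mathtt M$ if $p\le X_A$ and $u_A^M(p)>u_A^W(p)$, else $\mathtt A_b(p)=\mathtt W$ (ties go to withdrawing). $B$'s payoff is $u_B(p)=(1-v_{B,b})L(X_B-p,X_A-p)$ if $\mathtt A_b(p)=\mathtt M$ and $u_B(p)=v_{B,b}+(1-v_{B,b})L(X_B-p,X_A)$ if $\mathtt A_b(p)=\mathtt W$. *)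

(* Defs.v *)
From Stdlib Require Import Reals Lra.
Open Scope R_scope.

Definition L (x y : R) : R :=
  if Rle_lt_dec x y then
    (if Rlt_dec 0 y then x / (2 * y) else 1 / 2)   (* x <= y: y > 0, or x = y = 0 *)
  else 1 - y / (2 * x).

(* battlefields are 1 and 2, encoded as nat; any b other than 1 is battlefield 2 *)
Definition vA (alpha : R) (b : nat) : R := if Nat.eqb b 1 then alpha else 1 - alpha.
Definition vB (alpha : R) (b : nat) : R := if Nat.eqb b 1 then 1 - alpha else alpha.

Definition cconst (alpha : R) : R := (1 - alpha) ^ 2 / alpha + alpha ^ 2 / (1 - alpha).

Definition S (alpha XA XB sigma : R) : R :=
  let c := cconst alpha in
  let r := XA / XB in
  if Rlt_dec sigma (alpha / (1 - alpha)) then sigma ^ 2 * (c * sigma - r)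
  else if Rlt_dec sigma ((1 - alpha) / alpha) then
    alpha ^ 2 / (1 - alpha) * (sigma ^ 3 - r) + alpha * sigma * (1 - r * sigma)
  else sigma - r * c.

Definition piB (alpha sigma : R) : R :=
  if Rlt_dec sigma (alpha / (1 - alpha)) then 1 - sigma / 2
  else if Rlt_dec sigma ((1 - alpha) / alpha) then
    1 - alpha - alpha * sigma / 2 + alpha ^ 2 / (2 * sigma * (1 - alpha))
  else cconst alpha / (2 * sigma).

(* A's utilities after B pre-commits p to battlefield b *)
Definition uAM (alpha XA XB : R) (b : nat) (p : R) : R :=
  vA alpha b + (1 - vA alpha b) * L (XA - p) (XB - p).
Definition uAW (alpha XA XB : R) (b : nat) (p : R) : R :=
  (1 - vA alpha b) * L XA (XB - p).

(* A's response A_b(p) = M iff p <= XA and uAM > uAW (ties -> W); uB inlines it. *)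
Definition uB (alpha XA XB : R) (b : nat) (p : R) : R :=
  if Rle_dec p XA then
    if Rgt_dec (uAM alpha XA XB b p) (uAW alpha XA XB b p)
    then (1 - vB alpha b) * L (XB - p) (XA - p)
    else vB alpha b + (1 - vB alpha b) * L (XB - p) XA
  else vB alpha b + (1 - vB alpha b) * L (XB - p) XA.

(* Main.v *)
Require Import Defs.
From Stdlib Require Import Reals.
From Stdlib Require Import Lra Psatz Arith.
Open Scope R_scope.

Lemma Rdiv_pos_nonneg_compat_fix x y : 0 <= x -> 0 < y -> 0 <= x / y.
Proof. intros. unfold Rdiv. apply Rmult_le_pos; [lra|left; apply Rinv_0_lt_compat; lra]. Qed.

Lemma L_le' x y : 0 <= x <= y -> 0 < y -> L x y = x / (2 * y).
Proof. intros. unfold L. destruct (Rle_lt_dec x y); [destruct (Rlt_dec 0 y)|]; lra. Qed.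

Lemma L_gt' x y : 0 <= y < x -> L x y = 1 - y / (2 * x).
Proof. intros. unfold L. destruct (Rle_lt_dec x y); [lra|reflexivity]. Qed.

Lemma two_a_le t a : 0<t<1 -> 0<a<=1 -> 8*a <= (t+2*a)^2 -> 3*a*t^2<1 -> 2*a <= t.
Proof.
intros Ht Ha H1 H2. destruct (Rle_lt_dec (2*a) t); auto. exfalso.
assert (a > 1/2) by nra.
destruct (Rle_lt_dec a (4/5)).
- assert (t >= 9/10). { destruct (Rle_lt_dec (9/10) t); [lra|]. nra. } nra.
- assert (t >= 4/5). { destruct (Rle_lt_dec (4/5) t); [lra|]. nra. } nra.
Qed.

Lemma Sdef a t XA z : 0 < a -> 0 < t -> 0 < XA ->
  S (a/(1+a)) XA (t*XA) z =
  if Rlt_dec z a then z^2*((1+a^3)/(a*(1+a))*z - 1/t)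
  else if Rlt_dec z (1/a) then a/(1+a)*(a*z^3 - z^2/t + z - a/t)
  else z - (1+a^3)/(t*a*(1+a)).
Proof.
intros Ha Ht HX.
assert (E1 : a/(1+a)/(1 - a/(1+a)) = a) by (field; lra).
assert (E2 : (1 - a/(1+a))/(a/(1+a)) = 1/a) by (field; lra).
assert (E3 : XA/(t*XA) = 1/t) by (field; lra).
assert (E4 : cconst (a/(1+a)) = (1+a^3)/(a*(1+a))) by (unfold cconst; field; lra).
unfold S; cbv zeta. rewrite E1, E2, E3, E4.
destruct (Rlt_dec z a); [reflexivity|].
destruct (Rlt_dec z (1/a)); field; lra.
Qed.

Lemma piBdef a z : 0 < a -> 0 < z ->
  piB (a/(1+a)) z =
  if Rlt_dec z a then 1 - z/2
  else if Rlt_dec z (1/a) then (1 - a*z/2 + a^2/(2*z))/(1+a)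
  else (1+a^3)/(a*(1+a))/(2*z).
Proof.
intros Ha Hz.
assert (E1 : a/(1+a)/(1 - a/(1+a)) = a) by (field; lra).
assert (E2 : (1 - a/(1+a))/(a/(1+a)) = 1/a) by (field; lra).
assert (E4 : cconst (a/(1+a)) = (1+a^3)/(a*(1+a))) by (unfold cconst; field; lra).
unfold piB. rewrite E1, E2, E4.
destruct (Rlt_dec z a); [reflexivity|].
destruct (Rlt_dec z (1/a)); [field; lra|reflexivity].
Qed.

Lemma piB_bound a t XA s : 0 < a <= 1 -> 0 < t < 1 -> 0 < XA -> 0 < s ->
  S (a/(1+a)) XA (t*XA) s = 0 ->
  (forall z, 0 < z -> S (a/(1+a)) XA (t*XA) z = 0 -> z = s) ->
  piB (a/(1+a)) s < 1/(1+a).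
Proof.
intros Ha Ht HX Hs HS Hu.
assert (Hti : 1 < 1/t). { apply (Rmult_lt_reg_r t); [lra|]. field_simplify; lra. }
assert (Hc : (1+a^3)/(a*(1+a)) * a = (1+a^3)/(1+a)) by (field; lra).
assert (Hc1 : (1+a^3)/(1+a) <= 1).
{ replace ((1+a^3)/(1+a)) with (1 - a + a^2) by (field; lra). nra. }
assert (Hcpos : 0 < (1+a^3)/(a*(1+a))).
{ apply Rdiv_lt_0_compat; nra. }
assert (Hia : a <= 1/a).
{ apply (Rmult_le_reg_r a); [lra|]. field_simplify; nra. }
rewrite Sdef in HS by lra. rewrite piBdef by lra.
destruct (Rlt_dec s a) as [H1|H1].
- exfalso.
  assert (Hz : (1+a^3)/(a*(1+a))*s - 1/t = 0).
  { apply (Rmult_eq_reg_l (s^2)); [|nra]. rewrite HS. ring. }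
  assert ((1+a^3)/(a*(1+a))*s < (1+a^3)/(a*(1+a))*a) by (apply Rmult_lt_compat_l; lra).
  lra.
- destruct (Rlt_dec s (1/a)) as [H2|H2].
  + assert (Ha1 : a < 1).
    { destruct (Rlt_or_le a 1) as [h|h]; auto. assert (a = 1) by lra. subst a.
      replace (1/1) with 1 in H2 by field. lra. }
    destruct (Rle_lt_dec (1+a) ((1+a^3)/t)) as [H3|H3].
    * exfalso.
      set (s0 := (1+a^3)/(t*a*(1+a))).
      assert (Hs0 : 1/a <= s0).
      { unfold s0. replace ((1+a^3)/(t*a*(1+a))) with (((1+a^3)/t)/(a*(1+a))) by (field; lra).
        replace (1/a) with ((1+a)/(a*(1+a))) by (field; lra).
        apply Rmult_le_compat_r; [|lra]. left; apply Rinv_0_lt_compat; nra. }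
      assert (HS0 : S (a/(1+a)) XA (t*XA) s0 = 0).
      { rewrite Sdef by lra.
        destruct (Rlt_dec s0 a); [lra|]. destruct (Rlt_dec s0 (1/a)); [lra|]. unfold s0; ring. }
      assert (s0 = s) by (apply Hu; [lra|exact HS0]). lra.
    * assert (Hcont : continuity (fun z => a*z^3 - z^2/t + z - a/t)).
      { unfold Rdiv. reg. }
      assert (Hlt : 1 < 1/a).
      { apply (Rmult_lt_reg_r a); [lra|]. field_simplify; lra. }
      assert (Hf1 : a*1^3 - 1^2/t + 1 - a/t < 0).
      { replace (a*1^3 - 1^2/t + 1 - a/t) with ((1+a)*(1 - 1/t)) by (field; lra). nra. }
      assert (Hf2 : 0 < a*(1/a)^3 - (1/a)^2/t + 1/a - a/t).
      { replace (a*(1/a)^3 - (1/a)^2/t + 1/a - a/t) with ((1+a - (1+a^3)/t)/(a^2)) by (field; lra).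
        apply Rdiv_lt_0_compat; nra. }
      destruct (IVT _ 1 (1/a) Hcont Hlt Hf1 Hf2) as [z [[Hz1 Hz2] Hz]].
      assert (Hza : z < 1/a).
      { destruct Hz2 as [Hz2|Hz2]; auto. subst z. lra. }
      assert (HSz : S (a/(1+a)) XA (t*XA) z = 0).
      { rewrite Sdef by lra.
        destruct (Rlt_dec z a); [lra|]. destruct (Rlt_dec z (1/a)); [|lra].
        rewrite Hz. ring. }
      assert (z = s) by (apply Hu; [lra|exact HSz]). subst z.
      replace ((1 - a*s/2 + a^2/(2*s))/(1+a)) with (1/(1+a) - a*(s*s - a)/(2*s*(1+a)))
        by (field; lra).
      assert (0 < a*(s*s - a)/(2*s*(1+a))) by (assert (1 <= s*s) by nra; apply Rdiv_lt_0_compat; [apply Rmult_lt_0_compat; lra | nra]).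
      lra.
  + assert (Hz : s = (1+a^3)/(t*a*(1+a))) by lra.
    assert (E : (1+a^3)/(a*(1+a))/(2*s) = t/2).
    { rewrite Hz. field. split; [|split]; try lra. nra. }
    rewrite E.
    assert (1/2 <= 1/(1+a)).
    { apply (Rmult_le_reg_r (2*(1+a))); [lra|]. field_simplify; lra. }
    lra.
Qed.

Lemma uB_bound a t XA : 0 < a <= 1 -> 0 < t < 1 -> 0 < XA -> 2*a <= t ->
  8*a <= (t+2*a)^2 ->
  1/(1+a) <= uB (a/(1+a)) XA (t*XA) 1 (XA*(t/2+a)).
Proof.
intros Ha Ht HX H2a Hlo.
set (p0 := t/2 + a).
assert (Hp0 : 0 < p0 <= t) by (unfold p0; lra).
assert (HP : XA*p0 <= t*XA) by nra.
assert (HPX : XA*p0 < XA) by nra.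
unfold uB, uAM, uAW, vA, vB. rewrite Nat.eqb_refl.
destruct (Rle_dec (XA*p0) XA) as [_|h]; [|lra].
destruct (Rgt_dec _ _) as [h|h].
- exfalso.
  rewrite (L_gt' (XA - XA*p0) (t*XA - XA*p0)) in h by nra.
  rewrite (L_gt' XA (t*XA - XA*p0)) in h by nra.
  assert (E : (1 - a/(1+a)) * (1 - (t*XA - XA*p0)/(2*XA))
     - (a/(1+a) + (1 - a/(1+a)) * (1 - (t*XA - XA*p0)/(2*(XA - XA*p0))))
     = ((t+2*a)^2 - 8*a)/(8*(1+a)*(1-p0))).
  { unfold p0. field. repeat split; try lra. intro hh. unfold p0 in HPX. nra. }
  assert (0 <= ((t+2*a)^2 - 8*a)/(8*(1+a)*(1-p0))).
  { apply Rdiv_pos_nonneg_compat_fix; [lra|]. nra. }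
  lra.
- rewrite (L_le' (t*XA - XA*p0) XA) by nra.
  assert (0 <= (t*XA - XA*p0)/(2*XA)) by (apply Rdiv_pos_nonneg_compat_fix; nra).
  assert (E : 1 - a/(1+a) = 1/(1+a)) by (field; lra).
  rewrite E. assert (0 <= 1 - 1/(1+a)).
  { rewrite <- E. assert (0 <= a/(1+a)) by (apply Rdiv_pos_nonneg_compat_fix; lra). lra. }
  nra.
Qed.

Theorem theorem3 (alpha XA XB : R) :
  0 < alpha <= 1 / 2 -> 0 < XA -> 0 < XB ->
  sqrt (8 * alpha / (1 - alpha)) - 2 * alpha / (1 - alpha) <= XB / XA ->
  XB / XA < Rmin 1 (sqrt ((1 - alpha) / (3 * alpha))) ->
  forall sigma_star : R,
    0 < sigma_star -> S alpha XA XB sigma_star = 0 ->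
    (forall s : R, 0 < s -> S alpha XA XB s = 0 -> s = sigma_star) ->
  exists (b : nat) (p : R),
    (b = 1%nat \/ b = 2%nat) /\ 0 <= p <= XB /\
    uB alpha XA XB b p > piB alpha sigma_star.
Proof.
intros Hal HXA HXB Hlo Hhi s Hs HS Hu.
set (t := XB/XA) in *.
assert (Ht0 : 0 < t) by (unfold t; apply Rdiv_lt_0_compat; lra).
assert (HXBt : XB = t*XA) by (unfold t; field; lra).
clearbody t.
set (a := alpha/(1-alpha)) in *.
assert (Ha0 : 0 < a) by (unfold a; apply Rdiv_lt_0_compat; lra).
assert (Ha1 : a <= 1).
{ unfold a. apply (Rmult_le_reg_r (1-alpha)); [lra|]. field_simplify; lra. }
assert (Hal' : alpha = a/(1+a)) by (unfold a; field; lra).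
assert (E1 : 8*alpha/(1-alpha) = 8*a) by (unfold a; field; lra).
assert (E2 : 2*alpha/(1-alpha) = 2*a) by (unfold a; field; lra).
assert (E3 : (1-alpha)/(3*alpha) = 1/(3*a)) by (unfold a; field; lra).
rewrite E1, E2 in Hlo. rewrite E3 in Hhi.
clearbody a. subst alpha XB.
assert (Ht1 : t < 1) by (eapply Rlt_le_trans; [exact Hhi| apply Rmin_l]).
assert (Ht2 : t < sqrt (1/(3*a))) by (eapply Rlt_le_trans; [exact Hhi| apply Rmin_r]).
assert (Hlo2 : 8*a <= (t+2*a)^2).
{ assert (h := sqrt_sqrt (8*a) ltac:(lra)). assert (h2 := sqrt_pos (8*a)). nra. }
assert (Hhi2 : 3*a*t^2 < 1).
{ assert (h := sqrt_sqrt (1/(3*a)) ltac:(left; apply Rdiv_lt_0_compat; lra)).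
  assert (h2 := sqrt_pos (1/(3*a))).
  assert (t*t < 1/(3*a)) by nra.
  assert (3*a*(t*t) < 3*a*(1/(3*a))) by (apply Rmult_lt_compat_l; lra).
  assert (3*a*(1/(3*a)) = 1) by (field; lra). simpl. lra. }
assert (H2a := two_a_le t a ltac:(lra) ltac:(lra) Hlo2 Hhi2).
exists 1%nat, (XA*(t/2+a)). split; [left; reflexivity|]. split; [split; nra|].
assert (h1 := uB_bound a t XA ltac:(lra) ltac:(lra) HXA H2a Hlo2).
assert (h2 := piB_bound a t XA s ltac:(lra) ltac:(lra) HXA Hs HS Hu).
lra.
Qed.
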